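(* Let $n\ge 2$, $\mathbf A\in\mathcal G_n$, and let \[T=\{(u,V)\in\mathcal D(U(\mathbf A),\mathbf 2)\times\mathcal P(\{0,\dots,n-1\}) : 0,n-1\in V \text{ and } |{\uparrow}u|+1=|V|\}.\] Define $\iota_{\mathbf A}\colon\mathcal G_n(\mathbf A,\mathbf C_n)\to T$ by $\iota_{\mathbf A}(x)=(\omega\circ x,\operatorname{ran}x)$, and define $\gamma_{\mathbf A}$ on $T$ as follows: if $(u,V)\in T$ and $V=\{i_0,i_1,\dots,i_m\}$ with $0=i_0<i_1<\dots<i_m=n-1$, then for $a\in A$, $\gamma_{\mathbf A}(u,V)(a)=i_k$ where $k=|\{v\in{\uparrow}u: v(a)=1\}|$. Then $\iota_{\mathbf A}$ is a well-defined map into $T$, $\gamma_{\mathbf A}$ is a well-defined map from $T$ into $\mathcal G_n(\mathbf A,\mathbf C_n)$, and $\iota_{\mathbf A}$ and $\gamma_{\mathbf A}$ are mutually inverse bijections. In particular, the map $x\mapsto\omega\circ x$ is a surjection from $\mathcal G_n(\mathbf A,\mathbf C_n)$ onto $\mathcal D(U(\mathbf A),\mathbf 2)$.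
   Context: Fix an integer $n\ge 2$. $\mathbf C_n$ is the Heyting algebra whose universe is the chain $\{0<1<\dots<n-1\}$, with lattice operations min and max, $\bot=0$, $\top=n-1$, and $a\to b=\top$ if $a\le b$, $a\to b=b$ if $b<a$. $\mathcal G_n$ denotes the class of algebras isomorphic to subalgebras of direct powers of $\mathbf C_n$. For $\mathbf A\in\mathcal G_n$, $\mathcal G_n(\mathbf A,\mathbf C_n)$ is the set of Heyting algebra homomorphisms $\mathbf A\to\mathbf C_n$, and $\operatorname{ran}x$ is the image of $x$. $U(\mathbf A)$ is the bounded distributive lattice reduct of $\mathbf A$; $\mathbf 2$ is the two-element bounded lattice; $\mathcal D(U(\mathbf A),\mathbf 2)$ is the set of bounded-lattice homomorphisms $U(\mathbf A)\to\mathbf 2$, ordered pointwise, and ${\uparrow}u$ is the set of elements $\ge u$. $\omega\colon U(\mathbf C_n)\to\mathbf 2$ is the lattice homomorphism with $\omega(\top)=1$ and $\omega(k)=0$ for $k<\top$. $\mathcal P(\{0,\dots,n-1\})$ is the power set of $\{0,\dots,n-1\}$. *)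

(* Defs.v *)
From HB Require Import structures.
From mathcomp Require Import all_boot all_order.
From Stdlib Require Import ClassicalEpsilon.
Set Implicit Arguments. Unset Strict Implicit. Unset Printing Implicit Defensive.

Record halg := HAlg {
  car :> Type;
  hmeet : car -> car -> car;
  hjoin : car -> car -> car;
  himp  : car -> car -> car;
  hbot  : car;
  htop  : car }.

(* The chain C_n on 'I_n = {0,...,n-1}; a map x : A -> 'I_n is a Heyting
   algebra homomorphism A -> C_n (operations of C_n written on values). *)
Definition is_hom (n : nat) (A : halg) (x : A -> 'I_n) : Prop :=
  [/\ forall a b, val (x (hmeet a b)) = minn (x a) (x b),
      forall a b, val (x (hjoin a b)) = maxn (x a) (x b),
      forall a b, val (x (himp a b)) = (if (x a <= x b)%N then n.-1 else val (x b)),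
      val (x (hbot A)) = 0%N &
      val (x (htop A)) = n.-1].

(* A \in G_n: A is isomorphic to a subalgebra of a direct power C_n^I, i.e.
   there is an injective map A -> ('I -> 'I_n) all of whose coordinates are
   homomorphisms (= operations computed pointwise). *)
Definition in_Gn (n : nat) (A : halg) : Prop :=
  exists (I : Type) (e : A -> I -> 'I_n),
    injective e /\ forall i, @is_hom n A (fun a => e a i).

Definition is_lhom (A : halg) (u : A -> bool) : Prop :=
  [/\ forall a b, u (hmeet a b) = u a && u b,
      forall a b, u (hjoin a b) = u a || u b,
      u (hbot A) = false &
      u (htop A) = true].

Definition le2 (A : halg) (u v : A -> bool) : Prop := forall a, u a -> v a.
Definition upset (A : halg) (u : A -> bool) (v : A -> bool) : Prop :=
  is_lhom v /\ le2 u v.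

Definition card_eq (X : Type) (P : X -> Prop) (k : nat) : Prop :=
  exists f : 'I_k -> X, injective f /\ forall y, P y <-> exists i, f i = y.

Definition ncard (X : Type) (P : X -> Prop) : nat :=
  epsilon (inhabits 0%N) (fun k => card_eq P k).

Definition asbool (P : Prop) : bool :=
  if excluded_middle_informative P then true else false.

Definition omega (n : nat) (i : 'I_n) : bool := val i == n.-1.

Definition ran (n : nat) (A : halg) (x : A -> 'I_n) : {set 'I_n} :=
  [set i | asbool (exists a, x a = i)].

Definition inT (n : nat) (A : halg) (p : (A -> bool) * {set 'I_n}) : Prop :=
  let: (u, V) := p in
  [/\ is_lhom u,
      exists2 i, i \in V & val i = 0%N,
      exists2 i, i \in V & val i = n.-1 &
      exists k, card_eq (upset u) k /\ k.+1 = #|V| ].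

Definition iota_map (n : nat) (A : halg) (x : A -> 'I_n) : (A -> bool) * {set 'I_n} :=
  (fun a => omega (x a), ran x).

(* gamma_map(u,V)(a) = i_k, with V = {i_0 < ... < i_m} and
   k = |{v in up u : v a = 1}|; d is an irrelevant default for nth. *)
Definition gamma_map (n : nat) (d : 'I_n) (A : halg) (p : (A -> bool) * {set 'I_n})
  : A -> 'I_n :=
  let: (u, V) := p in
  fun a => nth d (sort (fun i j : 'I_n => (i <= j)%N) (enum V))
               (ncard (fun v => upset u v /\ v a = true)).

(* Main.v *)
Require Import Defs.
From mathcomp Require Import all_boot all_order.
From mathcomp Require Import zify.
From Stdlib Require Import ClassicalEpsilon FunctionalExtensionality Classical.
Set Implicit Arguments. Unset Strict Implicit. Unset Printing Implicit Defensive.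

Lemma card_eq_iff X (P Q : X -> Prop) k :
  (forall y, P y <-> Q y) -> card_eq P k -> card_eq Q k.
Proof. move=> H [f [injf Hf]]; exists f; split=> // y; rewrite -H; exact: Hf. Qed.

Lemma card_eq_le X (P : X -> Prop) k1 k2 : card_eq P k1 -> card_eq P k2 -> k1 <= k2.
Proof.
move=> [f [injf Hf]] [g [injg Hg]].
have ex i : exists j, g j = f i by apply/Hg/Hf; exists i.
pose h i := proj1_sig (constructive_indefinite_description _ (ex i)).
have Hh i : g (h i) = f i by rewrite /h; case: constructive_indefinite_description.
have injh : injective h by move=> i j e; apply: injf; rewrite -!Hh e.
by have := leq_card h injh; rewrite !card_ord.
Qed.

Lemma ncard_eq X (P : X -> Prop) k : card_eq P k -> ncard P = k.
Proof.
move=> H; have := epsilon_spec (inhabits 0) (fun k => card_eq P k) (ex_intro _ k H).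
rewrite -/(ncard P) => H2; apply/eqP; rewrite eqn_leq.
by rewrite (card_eq_le H2 H) (card_eq_le H H2).
Qed.

Lemma card_eq_sub X (P : X -> Prop) k (f : 'I_k -> X) (Q : X -> bool) :
  injective f -> (forall y, P y <-> exists i, f i = y) ->
  card_eq (fun y => P y /\ Q y = true) #|[set i | Q (f i)]|.
Proof.
move=> injf Hf.
exists (fun j => f (enum_val j)); split.
  by move=> i j /injf /enum_val_inj.
move=> y; split.
  move=> [/Hf [i <-] Hq].
  have Hi : i \in [set i | Q (f i)] by rewrite inE.
  by exists (enum_rank_in Hi i); rewrite enum_rankK_in.
move=> [j <-]; split; first by apply/Hf; exists (enum_val j).
by have := enum_valP j; rewrite inE.
Qed.

Definition good n (A : halg) := forall s t : A,
  (forall x : A -> 'I_n, is_hom x -> val (x s) = val (x t)) -> s = t.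

Lemma Gn_good n A : in_Gn n A -> good n A.
Proof.
move=> [I [e [inj He]]] s t H; apply: inj.
apply: functional_extensionality => i; apply: val_inj; exact: (H (fun a => e a i) (He i)).
Qed.

Lemma valE n (i : 'I_n) : val i = nat_of_ord i. Proof. by []. Qed.

Lemma homE n (A : halg) (x : A -> 'I_n) : is_hom x ->
  [/\ forall a b, nat_of_ord (x (hmeet a b)) = minn (x a) (x b),
      forall a b, nat_of_ord (x (hjoin a b)) = maxn (x a) (x b),
      forall a b, nat_of_ord (x (himp a b)) = (if (x a <= x b)%N then n.-1 else nat_of_ord (x b)),
      nat_of_ord (x (hbot A)) = 0%N &
      nat_of_ord (x (htop A)) = n.-1].
Proof. by []. Qed.

Ltac idt g := apply: g; intros x Hx; destruct (homE Hx) as [Hm Hj Hi Hb Ht]; rewrite ?valE;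
  repeat rewrite ?Hm ?Hj ?Hi ?Hb ?Ht; repeat case: ifP => ?.

Lemma idMP n A (g : good n A) (a b : A) : hmeet a (himp a b) = hmeet a b.
Proof. idt g; have := ltn_ord (x a); have := ltn_ord (x b); lia. Qed.

Lemma idprelin n A (g : good n A) (a b : A) : hjoin (himp a b) (himp b a) = htop A.
Proof. idt g; have := ltn_ord (x a); have := ltn_ord (x b); lia. Qed.

Lemma idle n A (g : good n A) (a b : A) : hmeet b (himp a b) = b.
Proof. idt g; have := ltn_ord (x a); have := ltn_ord (x b); lia. Qed.

Lemma idimpj n A (g : good n A) (a c d : A) :
  himp a (hjoin c d) = hjoin (himp a c) (himp a d).
Proof. idt g; have := ltn_ord (x a); have := ltn_ord (x c); have := ltn_ord (x d); lia. Qed.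

Lemma idimpm n A (g : good n A) (a c d : A) :
  himp a (hmeet c d) = hmeet (himp a c) (himp a d).
Proof. idt g; have := ltn_ord (x a); have := ltn_ord (x c); have := ltn_ord (x d); lia. Qed.

Lemma idimpt n A (g : good n A) (a : A) : himp a (htop A) = htop A.
Proof. idt g; have := ltn_ord (x a); lia. Qed.

Lemma idimpaa n A (g : good n A) (a : A) : himp a a = htop A.
Proof. idt g; have := ltn_ord (x a); lia. Qed.

Lemma idimpb n A (g : good n A) (a b : A) :
  hmeet (himp a (hbot A)) (himp a b) = himp a (hbot A).
Proof. idt g; have := ltn_ord (x a); have := ltn_ord (x b); lia. Qed.

Lemma lh_MP n A (g : good n A) (v : A -> bool) a b :
  is_lhom v -> v a -> v (himp a b) -> v b.
Proof.
move=> [hm _ _ _] va vi; have := hm a (himp a b); rewrite (idMP g) hm va vi /=.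
by move=> ->.
Qed.

Lemma lh_le n A (g : good n A) (v : A -> bool) a b :
  is_lhom v -> v b -> v (himp a b).
Proof. by move=> [hm _ _ _] vb; have := hm b (himp a b); rewrite (idle g) vb. Qed.

Lemma lh_prelin n A (g : good n A) (v : A -> bool) a b :
  is_lhom v -> v (himp a b) || v (himp b a).
Proof. by move=> [_ hj _ ht]; rewrite -hj (idprelin g). Qed.

Lemma chain n A (g : good n A) (u v w : A -> bool) :
  is_lhom u -> is_lhom v -> is_lhom w -> le2 u v -> le2 u w ->
  le2 v w \/ le2 w v.
Proof.
move=> hu hv hw uv uw.
case: (classic (le2 v w)) => [|/not_all_ex_not [a Ha]]; [by left|right].
have va : v a by case: (v a) Ha => //; case: (w a).
have wa : w a = false by case: (w a) Ha => //; case: (v a).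
move=> b wb; case/orP: (lh_prelin g a b hu) => [/uv Hab|/uw Hba].
  exact: (lh_MP g hv va Hab).
by have := lh_MP g hw wb Hba; rewrite wa.
Qed.

Lemma extf n A (g : good n A) (v : A -> bool) a b :
  is_lhom v -> v (himp a b) = false ->
  [/\ is_lhom (fun c => v (himp a c)), le2 v (fun c => v (himp a c)),
      v (himp a a) = true & v (himp a b) = false].
Proof.
move=> hv vab; have [hm hj hb ht] := hv; split=> //.
- split.
  + by move=> c d; rewrite (idimpm g) hm.
  + by move=> c d; rewrite (idimpj g) hj.
  + apply/negbTE/negP => H; have := hm (himp a (hbot A)) (himp a b).
    by rewrite (idimpb g) H vab.
  + by rewrite (idimpt g).
- by move=> c vc; exact: (lh_le g a hv vc).
- by rewrite (idimpaa g).
Qed.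

Definition srt n (V : {set 'I_n}) := sort (fun i j : 'I_n => (i <= j)%N) (enum V).

Lemma srt_size n (V : {set 'I_n}) : size (srt V) = #|V|.
Proof. by rewrite size_sort cardE. Qed.

Lemma srt_mem n (V : {set 'I_n}) j : (j \in srt V) = (j \in V).
Proof. by rewrite mem_sort mem_enum. Qed.

Lemma srt_nth_mem n (V : {set 'I_n}) d i : i < #|V| -> nth d (srt V) i \in V.
Proof. by move=> hi; rewrite -srt_mem mem_nth // srt_size. Qed.

Lemma srt_surj n (V : {set 'I_n}) d j : j \in V -> exists2 i, i < #|V| & nth d (srt V) i = j.
Proof.
by move=> hj; exists (index j (srt V)); rewrite ?nth_index ?srt_mem // -srt_size index_mem srt_mem.
Qed.

Lemma srt_mono n (V : {set 'I_n}) d i j : i < j -> j < #|V| ->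
  (nth d (srt V) i < nth d (srt V) j)%N.
Proof.
move=> ij jV.
have so : sorted (fun i j : 'I_n => (i <= j)%N) (srt V).
  by apply: sort_sorted => x y; exact: leq_total.
have tr : transitive (fun i j : 'I_n => (i <= j)%N) by move=> x y z; exact: leq_trans.
have := sorted_ltn_nth tr d so; rewrite srt_size => H.
have le := H i j; rewrite !inE in le; have {}le := le (ltn_trans ij jV) jV ij.
have un : uniq (srt V) by rewrite sort_uniq enum_uniq.
have := @nth_uniq _ d (srt V) i j; rewrite !srt_size => /(_ (ltn_trans ij jV) jV un).
rewrite ltn_eqF // => ne.
rewrite ltn_neqAle le andbT; apply/negP => /eqP e.
by move: ne; rewrite -(inj_eq val_inj) /= e eqxx.
Qed.

Lemma srt_le n (V : {set 'I_n}) d i j : i < #|V| -> j < #|V| ->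
  (nth d (srt V) i <= nth d (srt V) j)%N = (i <= j).
Proof.
move=> iV jV; case: (ltngtP i j) => h.
- by have := srt_mono d h jV; lia.
- by have := srt_mono d h iV; lia.
- by rewrite h !leqnn.
Qed.

Lemma srt_inj n (V : {set 'I_n}) d i j : i < #|V| -> j < #|V| ->
  nth d (srt V) i = nth d (srt V) j -> i = j.
Proof.
move=> iV jV e; apply/eqP; rewrite eqn_leq -(srt_le d iV jV) -(srt_le d jV iV) e leqnn. by [].
Qed.

Lemma srt0 n (V : {set 'I_n}) d : (exists2 j, j \in V & val j = 0) ->
  val (nth d (srt V) 0) = 0.
Proof.
move=> [j jV j0]; rewrite valE in j0; have [i iV ei] := srt_surj d jV.
case: i iV ei => [|i] iV ei; first by rewrite ei.
by have := srt_mono d (ltn0Sn i) iV; rewrite ei j0.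
Qed.

Lemma srtlast n (V : {set 'I_n}) d : (exists2 j, j \in V & val j = n.-1) ->
  val (nth d (srt V) (#|V|.-1)) = n.-1.
Proof.
move=> [j jV j0]; rewrite valE in j0; have [i iV ei] := srt_surj d jV.
have KV : #|V|.-1 < #|V| by lia.
case: (ltngtP i #|V|.-1) => h.
- have := srt_mono d h KV; have := ltn_ord (nth d (srt V) #|V|.-1); rewrite ei; lia.
- lia.
- by rewrite -h ei.
Qed.

Lemma asboolP (P : Prop) : reflect P (asbool P).
Proof. by rewrite /asbool; case: excluded_middle_informative => h; constructor. Qed.

Record Tdata n (A : halg) (u : A -> bool) k (f : 'I_k -> A -> bool) : Prop := TD {
  tg : good n A; thu : is_lhom u; tinj : injective f;
  tHf : forall y, upset u y <-> exists i, f i = y }.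

Record Wdata n (A : halg) (u : A -> bool) k (f : 'I_k -> A -> bool) : Prop := WD {
  wg : good n A; whu : is_lhom u; winj : injective f;
  wfup : forall i, upset u (f i) }.

Lemma TW n A u k f : @Tdata n A u k f -> @Wdata n A u k f.
Proof. by move=> [g hu inj Hf]; split => // i; apply/Hf; exists i. Qed.

Definition SS (A : halg) k (f : 'I_k -> A -> bool) (a : A) := [set i | f i a].

Lemma fup n A u k f (D : @Wdata n A u k f) i : is_lhom (f i) /\ le2 u (f i).
Proof. exact: (wfup D). Qed.

Lemma nested n A u k f (D : @Wdata n A u k f) a b :
  SS f a \subset SS f b \/ SS f b \subset SS f a.
Proof.
case: (boolP (SS f a \subset SS f b)) => [h|/subsetPn [i ia ib]]; [by left|right].
apply/subsetP => j jb; apply: contraT => ja.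
have [hi ui] := fup D i; have [hj uj] := fup D j.
rewrite !inE in ia ib ja jb.
case: (chain (wg D) (whu D) hi hj ui uj) => h.
  by move: ja; rewrite (h a ia).
by move: ib; rewrite (h b jb).
Qed.

Lemma SSm n A u k f (D : @Wdata n A u k f) a b : SS f (hmeet a b) = SS f a :&: SS f b.
Proof. by apply/setP => i; rewrite !inE; case: (fup D i) => [[-> _ _ _] _]. Qed.

Lemma SSj n A u k f (D : @Wdata n A u k f) a b : SS f (hjoin a b) = SS f a :|: SS f b.
Proof. by apply/setP => i; rewrite !inE; case: (fup D i) => [[_ -> _ _] _]. Qed.

Lemma SSb n A u k f (D : @Wdata n A u k f) : SS f (hbot A) = set0.
Proof. by apply/setP => i; rewrite !inE; case: (fup D i) => [[_ _ -> _] _]. Qed.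

Lemma SSt n A u k f (D : @Wdata n A u k f) : SS f (htop A) = setT.
Proof. by apply/setP => i; rewrite !inE; case: (fup D i) => [[_ _ _ ->] _]. Qed.

Lemma SSi1 n A u k f (D0 : @Tdata n A u k f) a b :
  SS f a \subset SS f b -> SS f (himp a b) = setT.
Proof.
have D := TW D0.
move=> sub; apply/setP => i; rewrite !inE; apply: contraT => /negbTE H.
have [hl ul] := fup D i.
have [w1 w2 w3 w4] := extf (wg D) hl H.
have : upset u (fun c => f i (himp a c)).
  by split => // c /ul; exact: w2.
move/(tHf D0) => [j ej].
have ja : j \in SS f a by rewrite inE ej.
by move/subsetP: sub => /(_ j ja); rewrite inE ej w4.
Qed.

Lemma SSi2 n A u k f (D : @Wdata n A u k f) a b :
  ~~ (SS f a \subset SS f b) -> SS f (himp a b) = SS f b.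
Proof.
move=> /subsetPn [j ja jb]; rewrite !inE in ja jb.
apply/setP => i; rewrite !inE.
have [hi ui] := fup D i; have [hj uj] := fup D j.
apply/idP/idP; last by move=> ib; exact: (lh_le (wg D) a hi ib).
move=> iab; apply: contraT => ib.
have ia : f i a = false.
  by apply/negbTE/negP => ia; move: ib; rewrite (lh_MP (wg D) hi ia iab).
case: (chain (wg D) (whu D) hi hj ui uj) => h.
  by move: jb; rewrite (lh_MP (wg D) hj ja (h _ iab)).
by move: ia; rewrite (h a ja).
Qed.

Lemma cardle n A u k f (D : @Wdata n A u k f) a b :
  (#|SS f a| <= #|SS f b|) = (SS f a \subset SS f b).
Proof.
case: (boolP (SS f a \subset SS f b)) => h; first exact: subset_leq_card.
case: (nested D a b) => h'; first by rewrite h' in h.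
have : SS f b \proper SS f a by rewrite /proper h' h.
move/proper_card; lia.
Qed.

Lemma cardm n A u k f (D : @Wdata n A u k f) a b :
  #|SS f (hmeet a b)| = minn #|SS f a| #|SS f b|.
Proof.
rewrite (SSm D); case: (nested D a b) => h.
  by rewrite (setIidPl h); have := subset_leq_card h; lia.
by rewrite (setIidPr h); have := subset_leq_card h; lia.
Qed.

Lemma cardj n A u k f (D : @Wdata n A u k f) a b :
  #|SS f (hjoin a b)| = maxn #|SS f a| #|SS f b|.
Proof.
rewrite (SSj D); case: (nested D a b) => h.
  by rewrite (setUidPr h); have := subset_leq_card h; lia.
by rewrite (setUidPl h); have := subset_leq_card h; lia.
Qed.

Lemma uchar n A u k f (D0 : @Tdata n A u k f) a : (#|SS f a| == k) = u a.
Proof.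
have D := TW D0.
have [i0 e0] : exists i, f i = u.
  by apply/(tHf D0); split; [exact: (whu D)|].
case: (boolP (u a)) => ua.
  have -> : SS f a = setT.
    by apply/setP => i; rewrite !inE; case: (fup D i) => _; apply.
  by rewrite cardsT card_ord eqxx.
have : SS f a \subset [set~ i0].
  by apply/subsetP => i; rewrite !inE; apply: contraTneq => ->; rewrite e0.
move/subset_leq_card; rewrite cardsC1 card_ord => h.
have := ltn_ord i0 => h2; apply/eqP; lia.
Qed.

Lemma lh_big (A : halg) (v : A -> bool) I (r : seq I) (P : pred I) (F : I -> A) :
  is_lhom v -> v (\big[@hmeet A/htop A]_(i <- r | P i) F i) = \big[andb/true]_(i <- r | P i) v (F i).
Proof. by move=> [hm _ _ ht]; apply: (big_morph v). Qed.

Definition up (A : halg) k (f : 'I_k -> A -> bool) (i : 'I_k) := [set j | asbool (le2 (f i) (f j))].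

Lemma up_real n A u k f (D : @Wdata n A u k f) i : exists a, SS f a = up f i.
Proof.
have ex j : j \notin up f i -> exists a, f i a /\ f j a = false.
  rewrite inE => /asboolP /not_all_ex_not [a Ha]; exists a.
  by case: (f i a) Ha; case: (f j a).
pose c j := epsilon (inhabits (htop A)) (fun a => f i a /\ f j a = false).
have Hc j : j \notin up f i -> f i (c j) /\ f j (c j) = false.
  by move=> h; apply: (epsilon_spec (inhabits (htop A)) (fun a => f i a /\ f j a = false)); apply: ex.
exists (\big[@hmeet A/htop A]_(j in ~: up f i) c j).
apply/setP => l; rewrite !inE.
have [hl _] := fup D l.
rewrite (lh_big _ _ _ hl) big_andE.
apply/forallP/idP.
  move=> H; apply: contraT => nl0.
  have nl : l \notin up f i by rewrite inE.
  by have := H l; rewrite inE nl /= (Hc l nl).2.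
move=> /asboolP le j; apply/implyP; rewrite inE => nj.
by apply: le; exact: (Hc j nj).1.
Qed.

Lemma up_mem (A : halg) k (f : 'I_k -> A -> bool) i : i \in up f i.
Proof. by rewrite inE; apply/asboolP. Qed.

Lemma up_lt n A u k f (D : @Wdata n A u k f) i j :
  le2 (f i) (f j) -> i != j -> #|up f j| < #|up f i|.
Proof.
move=> le ne; apply: proper_card; rewrite /proper; apply/andP; split.
  apply/subsetP => l; rewrite !inE => /asboolP h; apply/asboolP => a /le; exact: h.
apply/subsetPn; exists i; first exact: up_mem.
rewrite inE; apply/negP => /asboolP h.
move/negP: ne; apply; apply/eqP; apply: (winj D).
by apply: functional_extensionality => a; apply/idP/idP; [apply: le|apply: h].
Qed.

Lemma realize n A u k f (D : @Wdata n A u k f) t : t <= k -> exists a, #|SS f a| = t.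
Proof.
move=> tk; case: t tk => [|t] tk.
  by exists (hbot A); rewrite (SSb D) cards0.
pose h2 i : 'I_k.+1 := inord #|up f i|.
have upk i : #|up f i| <= k by have := max_card (up f i); rewrite card_ord.
have h2E i : nat_of_ord (h2 i) = #|up f i| by rewrite inordK // ltnS.
have inj2 : injective h2.
  move=> i j e; have {}e : #|up f i| = #|up f j| by rewrite -!h2E e.
  apply/eqP; apply: contraT => ne.
  have [hi ui] := fup D i; have [hj uj] := fup D j.
  case: (chain (wg D) (whu D) hi hj ui uj) => le.
    by have := up_lt D le ne; lia.
  by have := up_lt D le (negbT (contraNF (fun e => introT eqP (esym (eqP e))) ne)); lia.
have sub : h2 @: setT \subset [set~ ord0].
  apply/subsetP => x /imsetP [i _ ->]; rewrite !inE; apply/eqP => /(congr1 val) /=.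
  rewrite h2E => e; have : 0 < #|up f i| by apply/card_gt0P; exists i; exact: up_mem.
  lia.
have ceq : #|h2 @: setT| = #|[set~ (ord0 : 'I_k.+1)]|.
  by rewrite card_imset // cardsT cardsC1 !card_ord.
have := subset_cardP ceq; rewrite sub => /(_ isT) eqs.
have : (inord t.+1 : 'I_k.+1) \in [set~ ord0].
  rewrite !inE; apply/eqP => /(congr1 val) /=; rewrite inordK //; lia.
rewrite -eqs => /imsetP [i _ ei].
have [a ea] := up_real D i; exists a; rewrite ea.
by have := congr1 val ei; rewrite /= inordK // h2E.
Qed.

Lemma srt_min n (V : {set 'I_n}) d i j : i < #|V| -> j < #|V| ->
  nat_of_ord (nth d (srt V) (minn i j)) = minn (nth d (srt V) i) (nth d (srt V) j).
Proof.
move=> iV jV; case: (leqP i j) => h.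
  have := srt_le d iV jV; rewrite h; lia.
have h' : j <= i by lia.
have := srt_le d jV iV; rewrite h'; lia.
Qed.

Lemma srt_max n (V : {set 'I_n}) d i j : i < #|V| -> j < #|V| ->
  nat_of_ord (nth d (srt V) (maxn i j)) = maxn (nth d (srt V) i) (nth d (srt V) j).
Proof.
move=> iV jV; case: (leqP i j) => h.
  have := srt_le d iV jV; rewrite h; lia.
have h' : j <= i by lia.
have := srt_le d jV iV; rewrite h'; lia.
Qed.

Lemma gammaE n A u (V : {set 'I_n}) k f d (D0 : @Tdata n A u k f) :
  gamma_map d (u, V) = fun a => nth d (srt V) #|SS f a|.
Proof.
have D := TW D0.
apply: functional_extensionality => a; rewrite /gamma_map -/(srt V); congr nth.
apply: ncard_eq; exact: (card_eq_sub (fun v => v a) (tinj D0) (tHf D0)).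
Qed.

Lemma gamma_ok n A (hA : in_Gn n A) d (p : (A -> bool) * {set 'I_n}) :
  inT p -> is_hom (gamma_map d p) /\ iota_map (gamma_map d p) = p.
Proof.
case: p => u V [hu h0 hl [k [[f [injf Hf]] kV]]].
have D0 : Tdata n u f by split => //; exact: Gn_good.
have D := TW D0.
rewrite (gammaE _ d D0).
have ltK a : #|SS f a| < #|V| by rewrite -kV ltnS; have := max_card (SS f a); rewrite card_ord.
have lastk : #|V|.-1 = k by rewrite -kV.
have Nk : nat_of_ord (nth d (srt V) k) = n.-1 by rewrite -lastk srtlast.
have kK : k < #|V| by lia.
split.
  split.
  - by move=> a b; rewrite ?valE (cardm D) srt_min.
  - by move=> a b; rewrite ?valE (cardj D) srt_max.
  - move=> a b /=; rewrite ?valE (srt_le d (ltK a) (ltK b)) (cardle D).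
    case: (boolP (SS f a \subset SS f b)) => h.
      by rewrite (SSi1 D0 h) cardsT card_ord.
    by rewrite (SSi2 D h).
  - by rewrite /= ?valE (SSb D) cards0 srt0.
  - by rewrite /= ?valE (SSt D) cardsT card_ord.
rewrite /iota_map; congr pair.
  apply: functional_extensionality => a; rewrite /omega -(uchar D0 a) -Nk.
  apply/eqP/eqP => [e|->]; last by [].
  apply: (srt_inj (d := d) (ltK a) kK); exact: val_inj.
apply/setP => j; rewrite inE; apply/asboolP/idP.
  by move=> [a <-]; apply: srt_nth_mem.
move=> jV; have [i iV ei] := srt_surj d jV.
have [a ea] := realize D (t := i) ltac:(lia).
by exists a; rewrite ea.
Qed.

Lemma ranP n (A : halg) (x : A -> 'I_n) j : reflect (exists a, x a = j) (j \in ran x).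
Proof. by rewrite inE; apply: asboolP. Qed.

Definition vj n (A : halg) (x : A -> 'I_n) (j : 'I_n) : A -> bool := fun a => (j <= x a)%N.

Lemma vj_inj n (A : halg) (x : A -> 'I_n) j1 j2 :
  j1 \in ran x -> j2 \in ran x -> vj x j1 = vj x j2 -> j1 = j2.
Proof.
move=> /ranP [a1 e1] /ranP [a2 e2] e; apply: val_inj => /=.
have h1 : vj x j1 a1 by rewrite /vj e1.
have h2 : vj x j2 a2 by rewrite /vj e2.
rewrite e /vj e1 in h1; rewrite -e /vj e2 in h2; lia.
Qed.

Lemma enumZ n (A : halg) (x : A -> 'I_n) (Z : {set 'I_n}) : Z \subset ran x ->
  card_eq (fun y => exists2 j, j \in Z & y = vj x j) #|Z|.
Proof.
move=> sub; exists (fun t => vj x (enum_val t)); split.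
  move=> t1 t2 e; apply: enum_val_inj; apply: vj_inj e;
  by apply: (subsetP sub); exact: enum_valP.
move=> y; split.
  move=> [j jZ ->]; exists (enum_rank_in jZ j); by rewrite enum_rankK_in.
by move=> [t <-]; exists (enum_val t) => //; exact: enum_valP.
Qed.

Lemma homu n (hn : 1 < n) (A : halg) (x : A -> 'I_n) : is_hom x -> is_lhom (fun a => omega (x a)).
Proof.
move=> /homE [Hm Hj Hi Hb Ht]; rewrite /omega.
split.
- move=> a b; rewrite ?valE Hm; have := ltn_ord (x a); have := ltn_ord (x b).
  by do 3 (case: eqP => ?); rewrite /= => // *; exfalso; lia.
- move=> a b; rewrite ?valE Hj; have := ltn_ord (x a); have := ltn_ord (x b).
  by do 3 (case: eqP => ?); rewrite /= => // *; exfalso; lia.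
- by rewrite ?valE Hb; case: eqP => //; lia.
- by rewrite ?valE Ht eqxx.
Qed.

Lemma charU n (A : halg) (hA : in_Gn n A) (x : A -> 'I_n) (d : 'I_n) (hd : val d = 0) :
  is_hom x -> forall y, upset (fun a => omega (x a)) y <-> exists2 j, j \in ran x :\ d & y = vj x j.
Proof.
move=> hx; have g := Gn_good hA; have [Hm Hj Hi Hb Ht] := homE hx.
move=> y; split.
  move=> [hy uy].
  have P0 : asbool (exists b, y b /\ x b = x (htop A)).
    by apply/asboolP; exists (htop A); split => //; case: hy.
  case: (@arg_minnP _ (x (htop A)) (fun i => asbool (exists b, y b /\ x b = i)) (fun i : 'I_n => nat_of_ord i) P0) => j /asboolP [b [yb xb]] jmin.
  have yE : y = vj x j.
    apply: functional_extensionality => a; rewrite /vj; apply/idP/idP => h.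
      by apply: jmin; apply/asboolP; exists a.
    apply: (lh_MP g hy yb); apply: uy; rewrite /omega ?valE Hi xb h; exact: eqxx.
  exists j => //; rewrite !inE; apply/andP; split; last first.
    by apply/asboolP; exists b.
  apply/eqP => jd; move: hy => [_ _ hb _]; move: hb; rewrite yE /vj jd.
  by rewrite Hb; move: hd; rewrite valE => ->.
move=> [j]; rewrite !inE => /andP [jd _] ->; split.
  split.
  - by move=> a b; rewrite /vj Hm leq_min.
  - by move=> a b; rewrite /vj Hj leq_max.
  - rewrite /vj Hb; apply/negbTE; move: jd; apply: contra; rewrite leqn0 => /eqP j0.
    by apply/eqP; apply: val_inj; rewrite /= j0 hd.
  - by rewrite /vj Ht; have := ltn_ord j; lia.
move=> a; rewrite /omega /vj ?valE => /eqP ->; have := ltn_ord j; lia.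
Qed.

Lemma iota_ok n (hn : 1 < n) (A : halg) (hA : in_Gn n A) (x : A -> 'I_n) :
  is_hom x -> inT (iota_map x).
Proof.
move=> hx; have [Hm Hj Hi Hb Ht] := homE hx.
have hb : x (hbot A) \in ran x by apply/ranP; exists (hbot A).
have ht : x (htop A) \in ran x by apply/ranP; exists (htop A).
split.
- exact: homu.
- by exists (x (hbot A)); rewrite ?valE.
- by exists (x (htop A)); rewrite ?valE.
exists #|ran x :\ x (hbot A)|; split; last by rewrite [in RHS](cardsD1 (x (hbot A))) hb.
apply: card_eq_iff (enumZ (subD1set _ _)) => y.
by rewrite (charU hA (d := x (hbot A))).
Qed.

Lemma cntZ n (A : halg) (x : A -> 'I_n) (d : 'I_n) (hd : val d = 0) (hx0 : d \in ran x) a :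
  nth d (srt (ran x)) #|[set j in ran x :\ d | (j <= x a)%N]| = x a.
Proof.
have xa : x a \in ran x by apply/ranP; exists a.
have [i iV ei] := srt_surj d xa.
have h0 : nat_of_ord (nth d (srt (ran x)) 0) = 0.
  by apply: srt0; exists d.
pose phi (l : 'I_i) := nth d (srt (ran x)) l.+1.
have lK (l : 'I_i) : l.+1 < #|ran x| by have := ltn_ord l; lia.
have injphi : injective phi.
  move=> l1 l2 e; apply: val_inj; rewrite ?valE; have := srt_inj (lK l1) (lK l2) e; lia.
suff -> : [set j in ran x :\ d | (j <= x a)%N] = phi @: setT.
  by rewrite card_imset // cardsT card_ord.
apply/setP => j; rewrite in_set in_setD1; apply/idP/idP.
  move=> /andP [/andP [jd jV] jle].
  have [i' i'V ei'] := srt_surj d jV.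
  case: i' i'V ei' => [|l] lV el.
    by move: jd; rewrite -el; case/eqP; apply: val_inj; rewrite /= h0 hd.
  have li : l < i.
    by have := srt_le d lV iV; rewrite el ei jle.
  by apply/imsetP; exists (Ordinal li) => //; rewrite inE.
move=> /imsetP [l _ ->]; rewrite /phi.
rewrite (srt_nth_mem _ (lK l)) andbT -ei (srt_le d (lK l) iV) (ltn_ord l) andbT.
apply/eqP => e; have := srt_mono d (ltn0Sn l) (lK l); rewrite e h0 -valE hd; lia.
Qed.

Lemma gamma_iota n (A : halg) (hA : in_Gn n A) (x : A -> 'I_n) (d : 'I_n) (hd : val d = 0) :
  is_hom x -> gamma_map d (iota_map x) = x.
Proof.
move=> hx; have [Hm Hj Hi Hb Ht] := homE hx.
have ed : x (hbot A) = d by apply: val_inj; rewrite /= Hb -hd.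
have hx0 : d \in ran x by apply/ranP; exists (hbot A).
apply: functional_extensionality => a; rewrite /gamma_map /iota_map -/(srt (ran x)).
rewrite -[RHS](cntZ hd hx0 a); congr nth; apply: ncard_eq.
apply: card_eq_iff (enumZ (_ : [set j in ran x :\ d | (j <= x a)%N] \subset ran x)).
  move=> y; rewrite (charU hA hd hx y); split.
    by move=> [j jZ ->]; rewrite inE in jZ; case/andP: jZ => jW ja; split => //; exists j.
  move=> [[j jW ->] ja]; exists j => //; rewrite inE jW; exact: ja.
by apply/subsetP => j; rewrite !inE => /andP [/andP [_ ->] _].
Qed.

Lemma idchain n A (g : good n A) (xs : nat -> A) :
  \big[@hjoin A/hbot A]_(i < n) himp (xs i) (xs i.+1) = htop A.
Proof.
apply: g => y hy; have [Hm Hj Hi Hb Ht] := homE hy; rewrite ?valE Ht.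
rewrite (big_morph (fun a => nat_of_ord (y a)) (id1 := 0) (op1 := maxn) Hj Hb).
case: (boolP [exists i : 'I_n, y (xs i) <= y (xs i.+1)]) => [/existsP [i hi]|].
  apply/eqP; rewrite eqn_leq; apply/andP; split.
    apply/bigmax_leqP => j _; rewrite Hi; case: ifP => _ //; have := ltn_ord (y (xs j.+1)); lia.
  by have := @leq_bigmax _ (fun i : 'I_n => nat_of_ord (y (himp (xs i) (xs i.+1)))) i; rewrite /= Hi hi.
move=> /existsPn H; exfalso.
have step i : i < n -> y (xs i.+1) < y (xs i).
  by move=> hi; have := H (Ordinal hi); rewrite -ltnNge.
have ind i : i <= n -> y (xs i) + i <= y (xs 0).
  elim: i => [|i IH] hi; first by rewrite addn0.
  have := step i hi; have := IH (ltnW hi); lia.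
have := ind n (leqnn n); have := ltn_ord (y (xs 0)); lia.
Qed.

Lemma bound n A u k f (D : @Wdata n A u k f) : k < n.
Proof.
rewrite ltnNge; apply/negP => nk.
have ex t : t <= k -> exists a, #|SS f a| = t by move=> h; exact: (realize D h).
pose at_ t := epsilon (inhabits (htop A)) (fun a => #|SS f a| = t).
have atE t : t <= k -> #|SS f (at_ t)| = t.
  by move=> h; apply: (epsilon_spec (inhabits (htop A)) (fun a => #|SS f a| = t)); apply: ex.
pose xs i := at_ (k - i).
have := idchain (wg D) xs => e.
have [hm hj hb ht] := whu D.
have := ht; rewrite -e (big_morph u (id1 := false) (op1 := orb) hj hb) big_orE.
move=> /existsP [i hi].
have ci : #|SS f (xs i)| = k - i by apply: atE; lia.
have ci1 : #|SS f (xs i.+1)| = k - i.+1 by apply: atE; lia.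
have ns : ~~ (SS f (xs i) \subset SS f (xs i.+1)).
  apply/negP => /subset_leq_card; rewrite ci ci1; have := ltn_ord i; lia.
case/subsetPn: ns => j; rewrite !inE => ja jb.
have [hl ul] := fup D j.
by move: jb; rewrite (lh_MP (wg D) hl ja (ul _ hi)).
Qed.

Lemma exists_enum n A (g : good n A) (u : A -> bool) (hu : is_lhom u) :
  exists k, card_eq (upset u) k.
Proof.
pose P k := asbool (exists f : 'I_k -> A -> bool, @Wdata n A u k f).
have P0 : P 0.
  apply/asboolP; exists (fun _ => u); split => //; by case.
have ub m : P m -> m <= n.
  by move/asboolP => [f D]; have := bound D; lia.
case: (ex_maxnP (ex_intro _ 0 P0) ub) => k /asboolP [f D] kmax.
exists k; exists f; split; first exact: (winj D).
move=> y; split; last by move=> [i <-]; exact: (wfup D).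
move=> uy; apply: NNPP => nex.
pose g2 (i : 'I_k.+1) := if unlift ord_max i is Some j then f j else y.
have Dg : @Wdata n A u k.+1 g2.
  split; [exact: (wg D)|exact: (whu D)| |].
  - move=> i1 i2; rewrite /g.
    case: (unliftP ord_max i1) => [j1 ->|->]; case: (unliftP ord_max i2) => [j2 ->|->] //; rewrite /g2 ?liftK ?unlift_none.
    + by move=> e; rewrite (winj D e).
    + by move=> e; exfalso; apply: nex; exists j1.
    + by move=> e; exfalso; apply: nex; exists j2.
  - by move=> i; rewrite /g2; case: (unlift ord_max i) => [j|]; [exact: (wfup D)|exact: uy].
have : P k.+1 by apply/asboolP; exists g2.
by move/kmax; rewrite ltnn.
Qed.

Theorem lemma2p2 (n : nat) (hn : (1 < n)%N) (A : halg) (hA : in_Gn n A) :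
  let d : 'I_n := Ordinal (ltnW hn) in
  [/\ (forall x : A -> 'I_n, @is_hom n A x -> @inT n A (iota_map x)),
      (forall p : (A -> bool) * {set 'I_n}, @inT n A p -> @is_hom n A (gamma_map d p)),
      (forall x : A -> 'I_n, @is_hom n A x -> gamma_map d (iota_map x) = x),
      (forall p : (A -> bool) * {set 'I_n}, @inT n A p -> iota_map (gamma_map d p) = p) &
      (forall u : A -> bool, is_lhom u ->
         exists x : A -> 'I_n, @is_hom n A x /\ (fun a => omega (x a)) = u)].
Proof.
move=> d; have hd : val d = 0 by [].
split.
- by move=> x hx; exact: iota_ok.
- by move=> p hp; case: (gamma_ok hA d hp).
- by move=> x hx; exact: gamma_iota.
- by move=> p hp; case: (gamma_ok hA d hp).
move=> u hu; have g := Gn_good hA.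
have [k ck] := exists_enum g hu.
have ck' := ck; case: ck' => f [injf Hf].
have D0 : Tdata n u f by split.
have kn := bound (TW D0).
have k0 : 0 < k.
  have [i _] : exists i, f i = u by apply/Hf; split.
  exact: (leq_ltn_trans _ (ltn_ord i)).
pose phi (j : 'I_k.+1) : 'I_n := insubd d (if (j < k)%N then val j else n.-1).
have phiE j : nat_of_ord (phi j) = if (j < k)%N then val j else n.-1.
  have := ltn_ord j; rewrite /phi -valE val_insubd.
  case: (j < k) => /=; case: ifP => //; rewrite ?valE; lia.
have injphi : injective phi.
  move=> j1 j2 e; apply: val_inj; have := congr1 val e; rewrite ?valE !phiE.
  have := ltn_ord j1; have := ltn_ord j2.
  by case: ifP => h1; case: ifP => h2; rewrite ?valE; lia.
pose V := phi @: [set: 'I_k.+1].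
have hT : inT (u, V).
  split => //.
  - exists (phi ord0); first exact: imset_f.
    by rewrite valE phiE /= k0.
  - exists (phi ord_max); first exact: imset_f.
    by rewrite valE phiE /= ltnn.
  - by exists k; split => //; rewrite card_imset // cardsT card_ord.
have [hx ix] := gamma_ok hA d hT.
exists (gamma_map d (u, V)); split => //.
by have := congr1 fst ix.
Qed.
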